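(* Let $K$ be a field. For $n\ge 1$ let $A_n \subset K[a_g^{(i)} : g \in \mathbb{Z}_2, i = 1,\dots,n+1]$ be the $K$-subalgebra $$A_n := K\big[a_{g_1}^{(1)}a_{g_2}^{(2)}\cdots a_{g_n}^{(n)}a_{g_1+g_2+\cdots+g_n}^{(n+1)} : g_1,\dots,g_n \in \mathbb{Z}_2\big],$$ graded by giving each variable $a_g^{(i)}$ degree one (so $A_n$ is generated by $2^n$ monomials of degree $n+1$). Then for every $n \geq 2$, $$\dim_K [A_n]_{2(n+1)} = \dim_K [A_{n-1}]_{2n} + 3^n - 2^{n-1}.$$
   Context: $\mathbb{Z}_2=\{0,1\}$ is the group of integers modulo $2$; the sums $g_1+\cdots+g_n$ are taken in $\mathbb{Z}_2$. $[A]_d$ denotes the homogeneous component of degree $d$. *)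

(* Defs.v *)
From HB Require Import structures.
From mathcomp Require Import all_boot all_order all_algebra.
From mathcomp Require Import mpoly.
Set Implicit Arguments. Unset Strict Implicit. Unset Printing Implicit Defensive.
Import Order.TTheory GRing.Theory Num.Theory.
Local Open Scope ring_scope.

(* The polynomial ring K[a_g^(i) : g in Z_2, i = 1..n+1] is {mpoly K[n.*2.+2]};
   the variable a_g^(i+1) (0 <= i <= n, g : bool = Z_2) is 'X_(2i+g). *)
Definition avar (n : nat) (i : nat) (g : bool) : 'I_(n.*2.+2) :=
  inord (i.*2 + g)%N.

Definition zsum (n : nat) (g : {ffun 'I_n -> bool}) : bool :=
  \big[addb/false]_(i < n) g i.

Definition gen (K : fieldType) (n : nat) (g : {ffun 'I_n -> bool})
  : {mpoly K[n.*2.+2]} :=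
  (\prod_(i < n) 'X_(avar n i (g i))) * 'X_(avar n n (zsum g)).

Definition gens (K : fieldType) (n : nat)
  : #|{ffun 'I_n -> bool}|.-tuple {mpoly K[n.*2.+2]} :=
  [tuple gen K (enum_val j) | j < #|{ffun 'I_n -> bool}|].

Definition Aalg (K : fieldType) (n : nat) : {mpoly K[n.*2.+2]} -> Prop :=
  fun q => exists P : {mpoly K[#|{ffun 'I_n -> bool}|]}, q = P \mPo gens K n.

Definition homcomp (m : nat) (K : fieldType) (S : {mpoly K[m]} -> Prop) (d : nat)
  : {mpoly K[m]} -> Prop :=
  fun q => S q /\ q \is @ishomog1 m K d mdeg.

Definition has_dim (m : nat) (K : fieldType) (S : {mpoly K[m]} -> Prop) (d : nat)
  : Prop :=
  exists b : 'I_d -> {mpoly K[m]},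
    [/\ forall i, S (b i),
        (forall c : 'I_d -> K, \sum_(i < d) c i *: b i = 0 -> forall i, c i = 0)
      & forall q, S q -> exists c : 'I_d -> K, q = \sum_(i < d) c i *: b i].

Arguments Aalg : clear implicits.

(* Main.v *)
Require Import Defs.
From HB Require Import structures.
From mathcomp Require Import all_boot all_order all_algebra.
From mathcomp Require Import mpoly.
From mathcomp Require Import zify.
Set Implicit Arguments. Unset Strict Implicit. Unset Printing Implicit Defensive.
Import Order.TTheory GRing.Theory Num.Theory.

Section Comb.
Variable m : nat.
Local Notation G := {ffun 'I_m -> bool}.
Local Notation T := {ffun 'I_m -> 'I_3}.

Definition Sn (g : G) : nat := \sum_(i < m) (g i : nat).
Lemma zsumE (g : G) : zsum g = odd (Sn g).
Proof.
rewrite /zsum /Sn; elim/big_rec2: _ => // i b n _ ->.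
by rewrite oddD oddb.
Qed.

Definition code (gh : G * G) : T * 'I_3 :=
  ([ffun i => inord (gh.1 i + gh.2 i)], inord (odd (Sn gh.1) + odd (Sn gh.2))).

Definition C : {set T * 'I_3} := code @: [set: G * G].

Definition kk (t : T) : nat := \sum_(i < m) (val (t i) == 1%N).
Definition c2 (t : T) : nat := \sum_(i < m) (val (t i) == 2%N).
Definition valid (t : T) (l : 'I_3) : bool :=
  if odd (kk t) then val l == 1%N
  else if kk t == 0%N then val l == (odd (c2 t)).*2
  else val l != 1%N.

Section Facts.
Variables (t : T) (g h : G).
Hypothesis ht : forall i, val (t i) = (g i + h i)%N.

Lemma kkE : kk t = \sum_(i < m) (g i != h i).
Proof. by apply: eq_bigr => i _; rewrite ht; case: (g i); case: (h i). Qed.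

Lemma SnD : (Sn g + Sn h = kk t + c2 t + c2 t)%N.
Proof.
rewrite /Sn /kk /c2 -!big_split /=; apply: eq_bigr => i _; rewrite ht.
by case: (g i); case: (h i).
Qed.

Lemma Sn_kk0 : kk t = 0%N -> Sn g = c2 t /\ Sn h = c2 t.
Proof.
move=> /eqP; rewrite kkE sum_nat_eq0 => /forallP hi.
have e : forall i, g i = h i.
  by move=> i; move: (hi i); case: (g i); case: (h i).
split; apply: eq_bigr => i _; rewrite ht ?e; by case: (h i).
Qed.

Lemma oddSn : odd (Sn g) (+) odd (Sn h) = odd (kk t).
Proof. by rewrite -oddD SnD -addnA addnn oddD odd_double addbF. Qed.

End Facts.

Lemma code_valid (gh : G * G) : valid (code gh).1 (code gh).2.
Proof.
case: gh => g h.
have ht : forall i, val ((code (g, h)).1 i) = (g i + h i)%N.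
  by move=> i; rewrite /= ffunE inordK //; case: (g i); case: (h i).
have hl : val (code (g, h)).2 = (odd (Sn g) + odd (Sn h))%N.
  by rewrite /= inordK //; case: (odd _); case: (odd _).
rewrite /valid hl; have := oddSn ht.
case: ifP => [_|_ H].
  by case: (odd (Sn g)); case: (odd (Sn h)).
case: ifP => [/eqP /(Sn_kk0 ht) [-> ->]|_]; first by case: (odd _).
by move: H; case: (odd (Sn g)); case: (odd (Sn h)).
Qed.

Lemma code_eq (t : T) (l : 'I_3) (g h : G) : (forall i, val (t i) = (g i + h i)%N) ->
  val l = (odd (Sn g) + odd (Sn h))%N -> code (g, h) = (t, l).
Proof.
move=> ht hl; congr pair; last by apply: val_inj; rewrite /= -hl inordK // hl;
   case: (odd _); case: (odd _).
apply/ffunP => i; rewrite ffunE; apply: val_inj; rewrite /= inordK; [exact: esym (ht i)|by case: (g i); case: (h i)].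
Qed.

Lemma valid_code (t : T) (l : 'I_3) : valid t l -> exists gh, code gh = (t, l).
Proof.
pose g0 : G := [ffun i => (0 < val (t i))%N].
pose h0 : G := [ffun i => val (t i) == 2%N].
have ht0 : forall i, val (t i) = (g0 i + h0 i)%N.
  move=> i; rewrite !ffunE; case: (t i) => [[|[|[|n]]] hn] //=.
have H := oddSn ht0.
rewrite /valid; case: ifP => [ok /eqP hl|ek].
  exists (g0, h0); apply: code_eq => //; rewrite hl.
  by move: H; rewrite ok; case: (odd (Sn g0)); case: (odd (Sn h0)).
case: ifP => [/eqP k0 /eqP hl|kn0 hl].
  exists (g0, h0); apply: code_eq => //; rewrite hl.
  by have [-> ->] := Sn_kk0 ht0 k0; case: (odd _).
have [i0 hi0] : exists i0, val (t i0) = 1%N.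
  move: kn0; rewrite /kk sum_nat_eq0 => /negbT; rewrite negb_forall => /existsP [i0].
  by rewrite eqb0 negbK => /eqP; exists i0.
have lv : val l = 0%N \/ val l = 2%N.
  by move: hl; case: l => [[|[|[|n]]] hn] //=; auto.
have ab : odd (Sn g0) = odd (Sn h0) by move: H; rewrite ek;
  case: (odd (Sn g0)); case: (odd (Sn h0)).
case: (boolP (val l == (odd (Sn g0) + odd (Sn h0))%N)) => [/eqP e|ne].
  by exists (g0, h0); apply: code_eq.
pose g : G := [ffun i => if i == i0 then false else g0 i].
pose h : G := [ffun i => if i == i0 then true else h0 i].
exists (g, h); apply: code_eq.
  move=> i; rewrite !ffunE; case: eqP => [->|_] /=; first by rewrite hi0.
  by have := ht0 i; rewrite !ffunE.
have rest : forall f f0 : G, (forall i, i != i0 -> f i = f0 i) ->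
    (Sn f + f0 i0 = Sn f0 + f i0)%N.
  move=> f f0 hf; rewrite /Sn (bigD1 i0) //= [in RHS](bigD1 i0) //=.
  rewrite (eq_bigr (fun i => (f0 i : nat))) => [|i /hf -> //].
rewrite addnAC [RHS]addnAC [f0 i0 + _]addnC //.
have e1 : (Sn g + g0 i0 = Sn g0 + g i0)%N by apply: rest => i hi; rewrite ffunE (negbTE hi).
have e2 : (Sn h + h0 i0 = Sn h0 + h i0)%N by apply: rest => i hi; rewrite ffunE (negbTE hi).
move: e1 e2; rewrite !ffunE eqxx /= hi0 /=.
move=> e1 e2.
have o1 : odd (Sn g0) = ~~ odd (Sn g) by move: e1; rewrite addn0 addn1 => <-; rewrite oddS.
have o2 : odd (Sn h) = ~~ odd (Sn h0) by move: e2; rewrite addn0 addn1 => ->; rewrite oddS.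
move: ne; rewrite o2 -ab o1; case: (odd (Sn g)) => /=; case: lv => ->.
all: by [].
Qed.

Lemma inC (t : T) (l : 'I_3) : ((t, l) \in C) = valid t l.
Proof.
apply/imsetP/idP => [[gh _ e]|v].
  by have := code_valid gh; rewrite -e.
by have [gh e] := valid_code v; exists gh; rewrite ?inE.
Qed.

Lemma sum_valid (t : T) :
  (\sum_(l < 3) valid t l = 1 + (~~ odd (kk t) && (kk t != 0%N)))%N.
Proof.
rewrite /valid !big_ord_recr big_ord0 /=.
by case: (odd _); case: (kk t == 0%N); case: (odd (c2 t)).
Qed.

Definition E := (\sum_(t : T) ~~ odd (kk t))%N.
Definition Z := (\sum_(t : T) (kk t == 0%N))%N.

Lemma cardT3 : #|{: T}| = (3 ^ m)%N.
Proof. by rewrite card_ffun !card_ord. Qed.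

Lemma cardC : #|C| = (3 ^ m + (E - Z))%N.
Proof.
have -> : #|C| = (\sum_(t : T) \sum_(l < 3) ((t, l) \in C))%N.
  rewrite pair_bigA /= -sum1_card big_mkcond /=.
  by apply: eq_bigr => [[t l]] _ /=; case: ((t, l) \in C).
rewrite (eq_bigr (fun t => 1 + (~~ odd (kk t) && (kk t != 0%N))))%N; last first.
  by move=> t _; rewrite -sum_valid; apply: eq_bigr => l _; rewrite inC.
rewrite big_split /= sum_nat_const cardT3 muln1; congr (_ + _).
have -> : E = (\sum_(t : T) ((~~ odd (kk t) && (kk t != 0%N)) : nat) + Z)%N.
  rewrite /E /Z -big_split /=; apply: eq_bigr => t _.
  by case: eqP => [->|_] //=; rewrite ?addn0 andbT.
by rewrite addnK.
Qed.

Lemma prod_bool (b : 'I_m -> bool) : (\prod_(i < m) (b i : nat) = [forall i, b i])%N.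
Proof.
case: (boolP [forall i, b i]) => [/forallP H | /forallPn [i Hi]].
  by rewrite big1 // => i _; rewrite H.
by rewrite (bigD1 i) //= (negbTE Hi) mul0n.
Qed.

Lemma Zeq : Z = (2 ^ m)%N.
Proof.
have -> : Z = (\sum_(t : T) \prod_(i < m) (val (t i) != 1%N))%N.
  apply: eq_bigr => t _; rewrite prod_bool /kk sum_nat_eq0.
  congr (nat_of_bool _).
  by apply/idP/idP => /forallP H; apply/forallP => i; have := H i; rewrite /= eqb0.
transitivity (\prod_(i < m) \sum_(x : 'I_3) ((val x != 1%N) : nat))%N.
  by rewrite bigA_distr_bigA.
rewrite (eq_bigr (fun _ => 2%N)); last by move=> i _; rewrite !big_ord_recr big_ord0.
by rewrite prod_nat_const card_ord.
Qed.

Lemma ZleE : (Z <= E)%N.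
Proof. by apply: leq_sum => t _; case: eqP => [->|]. Qed.

Lemma Eeq : (E.*2 = 3 ^ m + 1)%N.
Proof.
have s : (\sum_(t : T) ((-1) ^+ kk t : int) = 1)%R.
  rewrite (eq_bigr (fun t : T => \prod_(i < m) (-1) ^+ (val (t i) == 1%N)))%R; last first.
    by move=> t _; rewrite prodrXr.
  transitivity (\prod_(i < m) \sum_(x : 'I_3) ((-1) ^+ (val x == 1%N) : int))%R.
    by rewrite bigA_distr_bigA.
  rewrite big1 // => i _; rewrite !big_ord_recr big_ord0 /=.
  by rewrite expr0 expr1 addrK add0r.
have EO : (E + \sum_(t : T) odd (kk t) = 3 ^ m)%N.
  rewrite -big_split /= -cardT3 -sum1_card; apply: eq_bigr => t _.
  by case: (odd _).
have s2 : ((E%:R - (\sum_(t : T) odd (kk t))%:R : int) = 1)%R.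
  rewrite /E !natr_sum -sumrB -[RHS]s; apply: eq_bigr => t _.
  by rewrite -signr_odd; case: (odd _); rewrite /= ?expr0 ?expr1 ?subr0 ?sub0r.
move: EO s2; set O := (\sum_(t : T) odd (kk t))%N => EO s2.
lia.
Qed.
End Comb.

Section Alg.
Variable m : nat.
Local Notation G := {ffun 'I_m -> bool}.
Local Notation k := (m.*2.+2).
Local Open Scope ring_scope.

Lemma avarE (i : nat) (b : bool) : (i <= m)%N -> val (avar m i b) = (i.*2 + b)%N.
Proof. move=> hi; rewrite /avar; apply: inordK; case: b => /=; lia. Qed.

Lemma avar_eq (i i' : nat) (b b' : bool) : (i <= m)%N -> (i' <= m)%N ->
  (avar m i b == avar m i' b') = (i == i') && (b == b').
Proof.
move=> hi hi'; rewrite -val_eqE /= !avarE //.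
apply/eqP/andP => [e|[/eqP -> /eqP -> //]].
have ob : b = b' by move: (congr1 odd e); rewrite !oddD !odd_double /= !oddb.
by rewrite -ob in e *; split => //; lia.
Qed.

Lemma avar_surj (j : 'I_k) : j = avar m j./2 (odd j) /\ (j./2 <= m)%N.
Proof.
have hj : (j./2 <= m)%N.
  have := ltn_ord j; rewrite -{1}(odd_double_half j); case: (odd j) => /=; lia.
split => //; apply: val_inj; rewrite avarE // addnC odd_double_half //.
Qed.

Definition mon (g : G) : 'X_{1..k} :=
  (\sum_(i < m) U_(avar m i (g i)) + U_(avar m m (zsum g)))%MM.

Lemma monE1 (g : G) (i : 'I_m) b : mon g (avar m i b) = (g i == b) :> nat.
Proof.
rewrite /mon mnmDE mnm_sumE mnm1E avar_eq ?leqnn ?(ltnW (ltn_ord i)) //.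
rewrite eqn_leq leqNgt ltn_ord /= addn0 (bigD1 i) //= mnm1E avar_eq ?(ltnW (ltn_ord i)) // eqxx /=.
rewrite big1 ?addn0 // => j /negbTE hj; rewrite mnm1E avar_eq ?(ltnW (ltn_ord i)) ?(ltnW (ltn_ord j)) //.
by rewrite val_eqE hj.
Qed.

Lemma monE2 (g : G) b : mon g (avar m m b) = (zsum g == b) :> nat.
Proof.
rewrite /mon mnmDE mnm_sumE mnm1E avar_eq ?leqnn // eqxx /= big1 // => j _.
by rewrite mnm1E avar_eq ?leqnn ?(ltnW (ltn_ord j)) // (ltn_eqF (ltn_ord j)).
Qed.

Lemma monDE1 (g h : G) (i : 'I_m) b :
  (mon g + mon h)%MM (avar m i b) = if b then (g i + h i)%N else (2 - (g i + h i))%N.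
Proof. by rewrite mnmDE !monE1; case: b; case: (g i); case: (h i). Qed.

Lemma monDE2 (g h : G) b :
  (mon g + mon h)%MM (avar m m b) =
    if b then (zsum g + zsum h)%N else (2 - (zsum g + zsum h))%N.
Proof. by rewrite mnmDE !monE2; case: b; case: (zsum g); case: (zsum h). Qed.

Lemma mon_code (g h g' h' : G) :
  (mon g + mon h = mon g' + mon h')%MM <-> @code m (g, h) = @code m (g', h').
Proof.
split => [e | e].
  congr pair.
    apply/ffunP => i; rewrite !ffunE; congr inord.
    by have := congr1 (fun u : 'X_{1..k} => u (avar m i true)) e; rewrite /= !monDE1.
  congr inord; rewrite -!zsumE.
  by have := congr1 (fun u : 'X_{1..k} => u (avar m m true)) e; rewrite /= !monDE2.
have e1 : forall i : 'I_m, (g i + h i = g' i + h' i)%N.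
  move=> i; have := congr1 (fun c : {ffun 'I_m -> 'I_3} * 'I_3 => val (c.1 i)) e; rewrite /= !ffunE !inordK //.
    by case: (g' i); case: (h' i).
  by case: (g i); case: (h i).
have e2 : (zsum g + zsum h = zsum g' + zsum h')%N.
  have := congr1 (fun c : {ffun 'I_m -> 'I_3} * 'I_3 => val c.2) e; rewrite /= !inordK -?zsumE //.
    by case: (zsum g'); case: (zsum h').
  by case: (zsum g); case: (zsum h).
apply/mnmP => j; have [ej hj] := avar_surj j; rewrite ej.
case: (ltnP j./2 m) => [lt|ge].
  have -> : j./2 = val (Ordinal lt) by [].
  by rewrite !monDE1 e1.
have -> : j./2 = m by apply/eqP; rewrite eqn_leq hj ge.
by rewrite !monDE2 e2.
Qed.

Definition dflt : G * G := ([ffun=> false], [ffun=> false]).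
Definition mono (c : {ffun 'I_m -> 'I_3} * 'I_3) : 'X_{1..k} :=
  let gh := odflt dflt [pick gh | @code m gh == c] in (mon gh.1 + mon gh.2)%MM.

Lemma monoE (g h : G) : mono (@code m (g, h)) = (mon g + mon h)%MM.
Proof.
rewrite /mono; case: pickP => [[g' h'] /eqP e|none] /=; first exact/mon_code.
by have := none (g, h); rewrite eqxx.
Qed.

Lemma mono_inj c c' : c \in C m -> c' \in C m -> mono c = mono c' -> c = c'.
Proof.
move=> /imsetP [[g h] _ ->] /imsetP [[g' h'] _ ->].
by rewrite !monoE => /mon_code.
Qed.

Lemma mdeg_mon (g : G) : mdeg (mon g) = m.+1.
Proof.
rewrite /mon mdegD mdeg_sum mdeg1 (eq_bigr (fun _ => 1%N)) => [|i _]; last exact: mdeg1.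
by rewrite sum_nat_const card_ord muln1 addn1.
Qed.

Variable K : fieldType.
Local Notation N := #|{ffun 'I_m -> bool}|.

Lemma genE (g : G) : @gen K m g = 'X_[mon g].
Proof.
rewrite /gen /mon mpolyXD; congr (_ * _).
by rewrite (big_morph (fun u : 'X_{1..k} => 'X_[u] : {mpoly K[k]}) (@mpolyXD _ _) (mpolyX0 _ _)).
Qed.

Definition img (u : 'X_{1..N}) : 'X_{1..k} :=
  (\sum_(j < N) (mon (enum_val j) *+ u j))%MM.

Lemma X_comp (u : 'X_{1..N}) : 'X_[u] \mPo gens K m = 'X_[img u].
Proof.
rewrite comp_mpolyX /img.
rewrite (big_morph (fun u : 'X_{1..k} => 'X_[u] : {mpoly K[k]}) (@mpolyXD _ _) (mpolyX0 _ _)).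
by apply: eq_bigr => j _; rewrite tnth_mktuple genE mpolyXn.
Qed.

Lemma mdeg_img u : mdeg (img u) = (m.+1 * mdeg u)%N.
Proof.
rewrite /img mdeg_sum mdegE big_distrr /=; apply: eq_bigr => j _.
by rewrite mdegMn mdeg_mon mulnC.
Qed.

Lemma img_pair (a b : 'I_N) :
  img (U_(a) + U_(b))%MM = (mon (enum_val a) + mon (enum_val b))%MM.
Proof.
apply/mnmP => x; rewrite /img mnm_sumE mnmDE.
rewrite (eq_bigr (fun j => mon (enum_val j) x * (a == j) + mon (enum_val j) x * (b == j)))%N;
  last by move=> j _; rewrite mulmnE mnmDE !mnm1E mulnDr.
rewrite big_split /= (bigD1 a) //= [X in (_ + X)%N](bigD1 b) //= !eqxx !muln1.
by rewrite !big1 ?addn0 // => j /negbTE hj; rewrite eq_sym hj muln0.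
Qed.

Lemma deg2 (u : 'X_{1..N}) : mdeg u = 2%N -> exists a b, u = (U_(a) + U_(b))%MM.
Proof.
move=> hu.
have [a ha] : exists a, u a != 0%N.
  apply/existsP; apply: contraT; rewrite negb_exists => /forallP H.
  suff : u = 0%MM by move=> e; move: hu; rewrite e mdeg0.
  by apply/mnmP => i; rewrite mnm0E; have := H i; rewrite negbK => /eqP.
have le : (U_(a) <= u)%MM.
  by apply/mnm_lepP => i; rewrite mnm1E; case: eqP => [<-|]; rewrite ?lt0n.
have hv : mdeg (u - U_(a))%MM = 1%N.
  by have := mdegD (u - U_(a))%MM U_(a); rewrite submK // hu mdeg1; lia.
have /mdeg1P [b /eqP hb] : mdeg (u - U_(a))%MM == 1%N by rewrite hv.
by exists b, a; rewrite -hb submK.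
Qed.

Lemma main_dim : has_dim (homcomp (Aalg K m) (m + 1).*2) #|C m|.
Proof.
pose b := fun i : 'I_#|C m| => 'X_[mono (enum_val i)] : {mpoly K[k]}.
exists b; split.
- move=> i; rewrite /b; have /imsetP [[g h] _ ->] := enum_valP i; rewrite monoE; split.
    exists ('X_[U_(enum_rank g) + U_(enum_rank h)]).
    by rewrite X_comp img_pair !enum_rankK.
  rewrite dhomogX /= mdegD !mdeg_mon; apply/eqP; lia.
- move=> c hc i; have := congr1 (mcoeff (mono (enum_val i))) hc.
  rewrite raddf_sum mcoeff0 (bigD1 i) //= /b mcoeffZ mcoeffX eqxx mulr1 big1 ?addr0 //.
  move=> j hj; rewrite mcoeffZ mcoeffX.
  case: eqP => [e|_]; last by rewrite mulr0.
  by move: hj; rewrite (enum_val_inj (mono_inj (enum_valP j) (enum_valP i) e)) eqxx.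
- move=> q [[P ->] hq].
  set q' := P \mPo gens K m in hq *.
  have supp : forall e, q'@_e != 0 -> exists2 c, c \in C m & e = mono c.
    move=> e ne.
    have qE : q' = \sum_(u <- msupp P) P@_u *: 'X_[img u].
      by rewrite /q' comp_mpolyEX; apply: eq_bigr => u _; rewrite X_comp.
    have : has (fun u => img u == e) (msupp P).
      apply: contraR ne => /hasPn H; rewrite qE raddf_sum big1_seq //= => u hu.
      by rewrite mcoeffZ mcoeffX (negbTE (H u hu)) mulr0.
    case/hasP => u _ /eqP hue.
    have de : mdeg e = (m + 1).*2.
      by move/dhomogP: hq => H; have := H e; rewrite mcoeff_msupp ne => /(_ isT).
    have du : mdeg u = 2%N.
      move: de; rewrite -hue mdeg_img => de.
      by apply/eqP; rewrite -(eqn_pmul2l (ltn0Sn m)) de; apply/eqP; lia.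
    have [a [b' eu]] := deg2 du.
    exists (@code m (enum_val a, enum_val b')); first exact: imset_f.
    by rewrite monoE -img_pair -eu hue.
  exists (fun i => q'@_(mono (enum_val i))).
  clearbody q'; apply/mpolyP => e; rewrite /b [in RHS]raddf_sum /=.
  under eq_bigr do rewrite mcoeffZ mcoeffX.
  case: (eqVneq q'@_e 0) => [z|nz].
    by rewrite z big1 // => i _; case: eqP => [->|_]; rewrite ?z ?mulr0 ?mul0r.
  have [c hc ec] := supp e nz.
  rewrite (bigD1 (enum_rank_in hc c)) //= enum_rankK_in // -ec eqxx mulr1 big1 ?addr0 //.
  move=> j hj; case: eqP => [e'|_]; last by rewrite mulr0.
  have ejc : enum_val j = c by apply (mono_inj (enum_valP j) hc); rewrite e' ec.
  have : j == enum_rank_in hc c by apply/eqP/enum_val_inj; rewrite (enum_rankK_in hc hc).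
  by rewrite (negbTE hj).
Qed.
End Alg.

Lemma pow23 m : (2 ^ m <= 3 ^ m)%N.
Proof. by elim: m => // m IH; rewrite !expnS; lia. Qed.

Theorem lemma3p6 (K : fieldType) (n : nat) : (2 <= n)%N ->
  exists d : nat,
    has_dim (homcomp (Aalg K n.-1) (n.-1 + 1).*2) d /\
    has_dim (homcomp (Aalg K n) (n + 1).*2) (d + 3 ^ n - 2 ^ n.-1)%N.
Proof.
case: n => [//|m] _ /=.
exists #|C m|; split; first exact: (@main_dim m K).
have -> : (#|C m| + 3 ^ m.+1 - 2 ^ m)%N = #|C m.+1|.
  rewrite !cardC !Zeq.
  have := Eeq m; have := Eeq m.+1; have := ZleE m; have := ZleE m.+1.
  have := pow23 m.
  rewrite !Zeq !expnS; lia.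
exact: (@main_dim m.+1 K).
Qed.
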